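(* Let $M$ be a tame paving matroid. Then $M$ is quasi-paving.
   Context: A matroid $M$ of rank $n$ is a paving matroid if every circuit has cardinality $n$ or $n+1$. A dependent hyperplane of $M$ is a maximal subset of the ground set of cardinality at least $n$ in which every $n$-element subset is a circuit. A paving matroid is tame if any three distinct dependent hyperplanes have empty intersection. Quasi-paving construction: given a positive integer $n\le d$ and a collection $\mathcal{H}=\{H_1,\ldots,H_k\}$ of subsets of $[d]$ any three of which have empty intersection, the matroid on $[d]$ whose circuits are: (Type 1) the $(n-1)$-element subsets contained in the intersection of two distinct members of $\mathcal{H}$; (Type 2) the $n$-element subsets of some $H_i$ containing no Type 1 set; (Type 3) the $(n+1)$-element subsets containing no Type 1 or Type 2 set. A matroid is called quasi-paving (more precisely $n$-quasi-paving) if its set of circuits arises from this construction for some such $\mathcal{H}$ and $n$; $\mathcal{H}$ is then called a representation of it. *)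

(* Defs.v *)
From mathcomp Require Import all_boot.
Set Implicit Arguments. Unset Strict Implicit. Unset Printing Implicit Defensive.

(* A matroid on the ground set [d] = 'I_d is given by its set of circuits. *)
Section Matroid.
Variable d : nat.
Implicit Types (C Hs : {set {set 'I_d}}) (S T H : {set 'I_d}).

Definition is_circuit_family C : Prop :=
  [/\ set0 \notin C,
      (forall C1 C2 : {set 'I_d}, C1 \in C -> C2 \in C -> C1 \subset C2 -> C1 = C2) &
      (forall (C1 C2 : {set 'I_d}) (e : 'I_d), C1 \in C -> C2 \in C -> C1 != C2 -> e \in C1 :&: C2 ->
         exists2 C3 : {set 'I_d}, C3 \in C & C3 \subset (C1 :|: C2) :\ e)].

Definition indep C S : bool := [forall X in C, ~~ (X \subset S)].

Definition mrank C : nat := \max_(S : {set 'I_d} | indep C S) #|S|.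

Definition paving C : Prop :=
  forall X : {set 'I_d}, X \in C -> #|X| = mrank C \/ #|X| = (mrank C).+1.

Definition dh_prop C S : bool :=
  (mrank C <= #|S|) &&
  [forall T : {set 'I_d}, ((T \subset S) && (#|T| == mrank C)) ==> (T \in C)].

Definition dep_hyperplane C H : bool := maxset (dh_prop C) H.

Definition tame C : Prop :=
  forall H1 H2 H3 : {set 'I_d}, dep_hyperplane C H1 -> dep_hyperplane C H2 ->
    dep_hyperplane C H3 -> H1 != H2 -> H1 != H3 -> H2 != H3 ->
    H1 :&: H2 :&: H3 = set0.

Definition qp_type1 n Hs S : bool :=
  (#|S| == n.-1) &&
  [exists H1 in Hs, exists H2 in Hs, (H1 != H2) && (S \subset H1 :&: H2)].

Definition qp_type2 n Hs S : bool :=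
  [&& #|S| == n, [exists H in Hs, S \subset H] &
      [forall T : {set 'I_d}, (T \subset S) ==> ~~ qp_type1 n Hs T]].

Definition qp_type3 n Hs S : bool :=
  (#|S| == n.+1) &&
  [forall T : {set 'I_d}, (T \subset S) ==>
      (~~ qp_type1 n Hs T && ~~ qp_type2 n Hs T)].

Definition qp_circuits n Hs : {set {set 'I_d}} :=
  [set S | [|| qp_type1 n Hs S, qp_type2 n Hs S | qp_type3 n Hs S]].

Definition three_wise_disjoint Hs : Prop :=
  forall H1 H2 H3 : {set 'I_d}, H1 \in Hs -> H2 \in Hs -> H3 \in Hs ->
    H1 != H2 -> H1 != H3 -> H2 != H3 -> H1 :&: H2 :&: H3 = set0.

Definition quasi_paving C : Prop :=
  exists n Hs, [/\ 0 < n, n <= d, three_wise_disjoint Hs & C = qp_circuits n Hs].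

End Matroid.

(* Main.v *)
Require Import Defs.
From mathcomp Require Import all_boot.
From mathcomp Require Import zify.

Set Implicit Arguments. Unset Strict Implicit. Unset Printing Implicit Defensive.

Section Aux.
Variable d : nat.
Variable C : {set {set 'I_d}}.
Hypothesis hC : is_circuit_family C.
Hypothesis hP : paving C.

Lemma card_circ (X : {set 'I_d}) : X \in C -> mrank C <= #|X|.
Proof. by move=> /hP [] ->. Qed.

Lemma eq_card_sub (A B : {set 'I_d}) : A \subset B -> #|B| <= #|A| -> A = B.
Proof. by move=> h1 h2; apply/eqP; rewrite eqEcard h1 h2. Qed.

Lemma indep_le (S : {set 'I_d}) : indep C S -> #|S| <= mrank C.
Proof. move=> h; rewrite /mrank; exact: (@leq_bigmax_cond _ (fun S : {set 'I_d} => indep C S) (fun S : {set 'I_d} => #|S|) S h). Qed.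

Lemma dep_contains (S : {set 'I_d}) : mrank C < #|S| -> exists2 X : {set 'I_d}, X \in C & X \subset S.
Proof.
move=> hS; case h: (indep C S).
  by have := indep_le h; lia.
move/negbT: h; rewrite /indep negb_forall => /existsP[X].
by rewrite negb_imply negbK => /andP[h1 h2]; exists X.
Qed.

Lemma dhP (S T : {set 'I_d}) : dh_prop C S -> T \subset S -> #|T| = mrank C -> T \in C.
Proof.
move=> /andP[_ /forallP h] hT hc; have := h T; rewrite hT hc eqxx /=; exact.
Qed.

Lemma lemA k : forall I T : {set 'I_d}, #|I :\: T| = k -> 0 < mrank C ->
  #|I| = (mrank C).-1 -> #|T| = mrank C ->
  (forall x, x \in T -> x \notin I -> x |: I \in C) -> T \in C.
Proof.
case: hC => _ _ hE.
elim: k => [|k IH] I T hk hr hI hT hx.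
  have sIT : I \subset T by rewrite -setD_eq0 -cards_eq0 hk.
  have [x xT xI] : exists2 x, x \in T & x \notin I.
    apply/exists_inP; rewrite -negb_forall_in; apply/negP => /forall_inP hh.
    have : T \subset I by apply/subsetP => z /hh.
    move/subset_leq_card; lia.
  have -> : T = x |: I.
    symmetry; apply: eq_card_sub.
      by rewrite subUset sub1set xT sIT.
    by rewrite cardsU1 xI hI hT; lia.
  exact: hx.
have [i iIT] : exists i, i \in I :\: T.
  by apply/set0Pn; rewrite -cards_eq0 hk.
move: (iIT); rewrite inE => /andP[iT iI].
have [x xT xI] : exists2 x, x \in T & x \notin I.
  apply/exists_inP; rewrite -negb_forall_in; apply/negP => /forall_inP hh.
  have : T \subset I by apply/subsetP => z /hh.
  move/subset_leq_card; lia.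
pose I' := x |: (I :\ i).
have xI' : x \notin I :\ i by rewrite inE negb_and xI orbT.
apply: (IH I') => //.
- have -> : I' :\: T = (I :\: T) :\ i.
    apply/setP => z; rewrite !inE; case: (z =P x) => [->|_]; first by rewrite xT /= ?andbF.
    by case: (z == i); case: (z \in T); case: (z \in I).
  move: hk; rewrite (cardsD1 i) iIT; lia.
- rewrite /I' cardsU1 xI'; move: hI; rewrite (cardsD1 i I) iI; lia.
- move=> y yT yI'.
  have yx : y != x by apply/eqP => e; move: yI'; rewrite e setU11.
  have yi : y != i by apply/eqP => e; move: iT; rewrite -e yT.
  have yI : y \notin I.
    by move: yI'; rewrite !inE negb_or negb_and yi /= => /andP[_].
  have h1 := hx x xT xI; have h2 := hx y yT yI.
  have neq : x |: I != y |: I.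
    apply/eqP => e; have : x \in y |: I by rewrite -e setU11.
    by rewrite !inE (negbTE xI) orbF eq_sym (negbTE yx).
  have hi : i \in (x |: I) :&: (y |: I) by rewrite !inE iI !orbT.
  have [C3 C3in C3s] := hE _ _ i h1 h2 neq hi.
  have -> : y |: I' = C3.
    symmetry; apply: eq_card_sub.
      apply/subsetP => z zC3; move/subsetP: C3s => /(_ z zC3); rewrite !inE.
      by case: (z == i); case: (z == x); case: (z == y); case: (z \in I).
    have := card_circ C3in; rewrite cardsU1 yI' /I' cardsU1 xI'.
    move: hI hr; rewrite (cardsD1 i I) iI /= !add1n.
    move: (mrank C) #|I :\ i| #|C3| => a b c; clear; lia.
  by [].
Qed.

Lemma no_common (H1 H2 I : {set 'I_d}) :
  dep_hyperplane C H1 -> dep_hyperplane C H2 -> H1 != H2 ->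
  I \subset H1 :&: H2 -> #|I| = (mrank C).-1 -> 0 < mrank C -> False.
Proof.
move=> hH1 hH2 ne sI cI hr.
have sI1 : I \subset H1 by apply: subset_trans sI (subsetIl _ _).
have sI2 : I \subset H2 by apply: subset_trans sI (subsetIr _ _).
have dU : dh_prop C (H1 :|: H2).
  apply/andP; split.
    have := maxsetp hH1 => /andP[h _].
    exact: leq_trans h (subset_leq_card (subsetUl _ _)).
  apply/forallP => T; apply/implyP => /andP[sT /eqP cT].
  apply: (@lemA #|I :\: T|) => // x xT xI.
  have cx : #|x |: I| = mrank C.
    rewrite cardsU1 xI cI /=; move: hr; move: (mrank C) => a; clear; lia.
  have : x \in H1 :|: H2 by apply: (subsetP sT).
  rewrite inE => /orP[xH|xH].
    by apply: (dhP (maxsetp hH1)) cx; rewrite subUset sub1set xH sI1.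
  by apply: (dhP (maxsetp hH2)) cx; rewrite subUset sub1set xH sI2.
have e1 := maxsetsup hH1 dU (subsetUl _ _).
have e2 := maxsetsup hH2 dU (subsetUr _ _).
by move: ne; rewrite -e1 -{2}e2 eqxx.
Qed.

End Aux.

Lemma qp1_single d n (T : {set 'I_d}) : qp_type1 n [set setT] T = false.
Proof.
apply/negP => /andP[_ /existsP[H1 /andP[/set1P -> /existsP[H2 /andP[/set1P -> /andP[]]]]]].
by rewrite eqxx.
Qed.

Theorem proposition3p4 (d : nat) (C : {set {set 'I_d}}) :
  0 < d -> is_circuit_family C -> paving C -> tame C -> quasi_paving C.
Proof.
move=> d0 hC hP hT.
have hC' := hC; case: hC' => C0 hmin _.
case: (posnP (mrank C)) => [r0|rpos].
  exists 1, [set setT]; split => //.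
    by move=> H1 H2 H3; rewrite !inE => /eqP -> /eqP -> _; rewrite eqxx.
  have t2 : forall T : {set 'I_d}, qp_type2 1 [set setT] T = (#|T| == 1).
    move=> T; rewrite /qp_type2; case: eqP => //= _; apply/andP; split.
      by apply/existsP; exists setT; rewrite inE eqxx subsetT.
    by apply/forallP => T0; rewrite qp1_single implybT.
  apply/setP => S; rewrite inE qp1_single t2 /=.
  have -> : qp_type3 1 [set setT] S = false.
    rewrite /qp_type3; case: eqP => //= hS.
    have [x xS] : exists x, x \in S by apply/set0Pn; rewrite -cards_eq0 hS.
    apply/negP => /forallP /(_ [set x]); rewrite sub1set xS /= t2 cards1.
    by rewrite andbF.
  rewrite orbF; apply/idP/idP.
    move=> SC; case: (hP S SC); rewrite r0 => hS; last by rewrite hS.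
    by move: hS => /eqP; rewrite cards_eq0 => /eqP hS; move: C0; rewrite -hS SC.
  move=> /eqP hS.
  have [|X XC XS] := dep_contains (C := C) (S := S); first by rewrite r0 hS.
  have -> : S = X.
    symmetry; apply: eq_card_sub => //; rewrite hS.
    case: (posnP #|X|) => // /eqP; rewrite cards_eq0 => /eqP e.
    by move: C0; rewrite -e XC.
  exact: XC.
pose Hs := [set H | dep_hyperplane C H].
exists (mrank C), Hs; split => //.
- rewrite /mrank; apply/bigmax_leqP => S _.
  by have := subset_leq_card (subsetT S); rewrite cardsT card_ord.
- by move=> H1 H2 H3; rewrite !inE; exact: hT.
have noT1 : forall T, qp_type1 (mrank C) Hs T = false.
  move=> T; apply/negP => /andP[/eqP cT /existsP[H1 /andP[H1in /existsP[H2 /andP[H2in /andP[ne sub]]]]]].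
  rewrite /Hs !inE in H1in H2in.
  exact: (no_common hC hP H1in H2in ne sub cT rpos).
have t2 : forall T, qp_type2 (mrank C) Hs T = (#|T| == mrank C) && [exists H in Hs, T \subset H].
  move=> T; rewrite /qp_type2; case: eqP => //= _.
  case: existsP => //= _; apply/forallP => T0; by rewrite noT1 implybT.
have t2C : forall T : {set 'I_d}, #|T| = mrank C -> (T \in C) = [exists H in Hs, T \subset H].
  move=> T cT; apply/idP/idP.
    move=> TC.
    have dT : dh_prop C T.
      apply/andP; split; first by rewrite cT.
      apply/forallP => T'; apply/implyP => /andP[sT /eqP cT'].
      by rewrite (eq_card_sub sT) // cT cT'.
    have [H mH sH] := maxset_exists dT.
    by apply/existsP; exists H; rewrite /Hs inE /dep_hyperplane mH sH.
  move=> /existsP[H /andP[]]; rewrite /Hs inE => mH sH.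
  exact: (dhP (maxsetp mH) sH cT).
apply/setP => S; rewrite inE noT1 t2 /=; apply/idP/idP.
  move=> SC; case: (hP S SC) => cS.
    by rewrite cS eqxx -(t2C S cS) SC.
  apply/orP; right; rewrite /qp_type3 cS eqxx /=.
  apply/forallP => T; apply/implyP => sT; rewrite noT1 t2 /=.
  apply/negP => /andP[/eqP cT hex]; rewrite -(t2C T cT) in hex.
  have e := hmin _ _ hex SC sT; move: cT cS; rewrite e => ->.
  by move: (mrank C) => a; clear; lia.
move=> /orP[/andP[/eqP cS hex]|/andP[/eqP cS hall]]; first by rewrite t2C.
have [|X XC XS] := dep_contains (C := C) (S := S); first by rewrite cS.
case: (hP X XC) => cX.
  move/forallP: hall => /(_ X); rewrite XS /= t2 cX eqxx -(t2C X cX) XC.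
  by rewrite andbF.
have -> : S = X.
  symmetry; apply: eq_card_sub => //; rewrite cS cX.
  by [].
exact: XC.
Qed.
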